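(* Let $X$ and $Y$ be Banach spaces, $S\in\mathcal{L}(X,Y)$, $F\subset X$ bounded and convex, and $n\in\mathbb{N}_0$. Then $e_n^{\text{det-non-mb}}(S,F)\le 8\,e_n^{\text{det-non}}(S,F)$.
   Context: A deterministic non-adaptive algorithm with $n$ measurements is a map $A_n=\phi\circ(L_1,\dots,L_n)\colon F\to Y$ with fixed $L_1,\dots,L_n\in X'$ and arbitrary $\phi\colon\mathbb{R}^n\to Y$; its error is $\sup_{f\in F}\|S(f)-A_n(f)\|$. $e_n^{\text{det-non}}(S,F)$ is the infimum of the error over all such algorithms, and $e_n^{\text{det-non-mb}}(S,F)$ is the infimum over those such algorithms that are $(\mathcal{B}_F,\mathcal{B}_Y)$-measurable, where $\mathcal{B}_Y$ is the Borel $\sigma$-algebra of $Y$ and $\mathcal{B}_F$ the Borel $\sigma$-algebra on $F$ of the seminorm whose unit ball is $F-F$. *)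

(* Defs.v *)
From HB Require Import structures.
From mathcomp Require Import all_boot all_order all_algebra.
From mathcomp Require Import all_classical all_reals all_analysis.
Set Implicit Arguments. Unset Strict Implicit. Unset Printing Implicit Defensive.
Import Order.TTheory GRing.Theory Num.Theory.
Import numFieldNormedType.Exports.
Local Open Scope classical_set_scope.
Local Open Scope ring_scope.

Section Defs.
Variables (R : realType) (X Y : normedModType R).

Definition convex (F : set X) : Prop :=
  forall x y (t : R), F x -> F y -> 0 <= t -> t <= 1 -> F (t *: x + (1 - t) *: y).

Definition dual_elt (L : X -> R) : Prop :=
  (forall (a : R) (x y : X), L (a *: x + y) = a * L x + L y) /\ continuous L.

Definition det_non_alg (n : nat) (A : X -> Y) : Prop :=
  exists (L : 'I_n -> X -> R) (phi : ('I_n -> R) -> Y),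
    (forall i, dual_elt (L i)) /\ forall f, A f = phi (fun i => L i f).

Definition err (S : X -> Y) (F : set X) (A : X -> Y) : \bar R :=
  ereal_sup [set (`|S f - A f|)%:E | f in F].

(* Minkowski functional (seminorm) of F - F *)
Definition diffset (F : set X) : set X := [set f - g | f in F & g in F].
Definition mink (F : set X) (x : X) : \bar R :=
  ereal_inf [set t%:E | t in [set t : R | 0 < t /\ exists2 z, diffset F z & x = t *: z]].

(* open subsets of F for the (pseudo)metric d(f,g) = mink F (f - g) *)
Definition F_open (F : set X) (U : set X) : Prop :=
  U `<=` F /\ forall u, U u -> exists2 r : R, 0 < r &
     forall f, F f -> (mink F (f - u)%R < r%:E)%E -> U f.

Definition borel_F (F : set X) : set (set X) := <<s F, F_open F >>.

Definition borel_Y : set (set Y) := <<s [set U : set Y | open U] >>.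

Definition F_measurable (F : set X) (A : X -> Y) : Prop :=
  forall B, borel_Y B -> borel_F F (F `&` A @^-1` B).

Definition e_det_non (n : nat) (S : X -> Y) (F : set X) : \bar R :=
  ereal_inf [set err S F A | A in det_non_alg n].

Definition e_det_non_mb (n : nat) (S : X -> Y) (F : set X) : \bar R :=
  ereal_inf [set err S F A | A in [set A | det_non_alg n A /\ F_measurable F A]].

End Defs.

(* Main.v *)
Require Import Defs.
From mathcomp Require Import ring lra.
From HB Require Import structures.
From mathcomp Require Import all_boot all_order all_algebra.
From mathcomp Require Import all_classical all_reals all_analysis.
Import Order.TTheory GRing.Theory Num.Theory.
Import numFieldNormedType.Exports.
Local Open Scope classical_set_scope.
Local Open Scope ring_scope.

Section Aux.
Variables (R : realType) (X : normedModType R).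

Lemma lin_bound (W : normedModType R) (g : X -> W) : g 0 = 0 ->
  (forall (a : R) x, g (a *: x) = a *: g x) -> {for 0, continuous g} ->
  exists2 C : R, 0 < C & forall x, `|g x| <= C * `|x|.
Proof.
move=> g0 gZ gc.
have : \forall t \near (0 : X), `|g 0 - g t| < 1.
  by move/cvgrPdist_lt : gc; apply.
move=> /nbhs_norm0P [d d0 Hd].
exists (2 / d); first by rewrite divr_gt0.
move=> x; have [->|x0] := eqVneq x 0; first by rewrite g0 !normr0 mulr0.
have nx : 0 < `|x| by rewrite normr_gt0.
pose k := d / (2 * `|x|).
have k0 : 0 < k by rewrite divr_gt0 // mulr_gt0.
have : `|g (k *: x)| < 1.
  have := Hd (k *: x); rewrite /= g0 sub0r normrN; apply.
  rewrite normrZ gtr0_norm // /k -mulrA invfM mulrA [_ * `|x|]mulrC.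
  have -> : `|x| * (d * (2^-1 / `|x|)) = d / 2 by field; rewrite gt_eqF.
  by rewrite ltr_pdivrMr // ltr_pMr // ltr1n.
rewrite gZ normrZ gtr0_norm // /k => H.
have H2 : `|g x| < (2 * `|x|) / d.
  rewrite ltr_pdivlMr // mulrC; move: H; rewrite mulrAC ltr_pdivrMr ?mulr_gt0 //.
  by rewrite mul1r.
apply: ltW; apply: lt_le_trans H2 _.
by rewrite mulrAC.
Qed.

Variable (L : X -> R).
Hypothesis HL : forall (a : R) (x y : X), L (a *: x + y) = a * L x + L y.

Lemma L0 : L 0 = 0.
Proof.
have := HL 1 0 0; rewrite scaler0 addr0 mul1r => H.
by apply: (addrI (L 0)); rewrite addr0 -H.
Qed.

Lemma LZ a x : L (a *: x) = a * L x.
Proof. by have := HL a x 0; rewrite addr0 L0 addr0. Qed.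

Lemma LD x y : L (x + y) = L x + L y.
Proof. by have := HL 1 x y; rewrite scale1r mul1r. Qed.

Lemma LN x : L (- x) = - L x.
Proof. by rewrite -scaleN1r LZ mulN1r. Qed.

Lemma LB x y : L (x - y) = L x - L y.
Proof. by rewrite LD LN. Qed.

End Aux.
Arguments L0 {R X L}.
Arguments LZ {R X L}.
Arguments LD {R X L}.
Arguments LN {R X L}.
Arguments LB {R X L}.

Section Open.
Variables (R : realType) (X : normedModType R) (F : set X).

Lemma mink_lt x (r : R) : (mink F x < r%:E)%E ->
  exists t z, [/\ 0 < t, t < r, diffset F z & x = t *: z].
Proof.
move=> /ereal_inf_lt [y [t [t0 [z Dz xe]] <-]].
by rewrite lte_fin => tr; exists t, z.
Qed.

Lemma open_lt (l : X -> R) (M : R) : 0 <= M ->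
  (forall f u t z, F f -> F u -> 0 < t -> diffset F z -> f - u = t *: z ->
     l f - l u <= t * M) ->
  forall c, F_open F [set f | F f /\ l f < c].
Proof.
move=> M0 Hl c; split; first by move=> f [].
move=> u [Fu lu]; exists ((c - l u) / (M + 1)).
  by rewrite divr_gt0 // ?subr_gt0 // ltr_wpDl.
move=> f Ff /mink_lt [t [z [t0 tr Dz e]]]; split => //.
have := Hl _ _ _ _ Ff Fu t0 Dz e.
have : t * M <= (c - l u) / (M + 1) * M by apply: ler_wpM2r => //; apply: ltW.
have : (c - l u) / (M + 1) * M < c - l u.
  rewrite mulrAC ltr_pdivrMr ?ltr_wpDl //.
  by rewrite ltr_pM2l ?subr_gt0 // ltrDl.
lra.
Qed.

Definition BF := borel_F F.

Lemma BF_open U : F_open F U -> BF U.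
Proof. by move=> H; apply: sub_sigma_algebra. Qed.

Lemma BF_D U : BF U -> BF (F `\` U).
Proof. exact: sigma_algebraCD. Qed.

Lemma BF_U (U : (set X)^nat) : (forall k, BF (U k)) -> BF (\bigcup_k U k).
Proof. exact: sigma_algebra_bigcup. Qed.

Lemma BF_0 : BF set0.
Proof. exact: sigma_algebra0. Qed.

Lemma BF_F : BF F.
Proof. by rewrite -(setD0 F); apply: BF_D; exact: BF_0. Qed.
End Open.
Arguments BF {R X}.
Arguments BF_open {R X F}.
Arguments BF_D {R X F}.
Arguments BF_U {R X F}.
Arguments BF_0 {R X F}.
Arguments BF_F {R X F}.
Section K1.
Variables (R : realType) (n : nat) (Q : set 'rV[R]_n).
Hypotheses (Q0 : Q 0) (QN : forall x, Q x -> Q (- x))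
  (Qc : forall x y (t : R), Q x -> Q y -> 0 <= t -> t <= 1 -> Q (t *: x + (1 - t) *: y)).

Lemma Qsum m (w : 'I_m -> R) (q : 'I_m -> 'rV[R]_n) :
  (forall i, 0 <= w i) -> (forall i, Q (q i)) ->
  exists2 r, Q r & \sum_i w i *: q i = (\sum_i w i) *: r.
Proof.
elim: m w q => [|m IH] w q w0 Qq.
  by exists 0 => //; rewrite !big_ord0 scaler0.
have [r Qr Er] := IH (fun i => w (lift ord0 i)) (fun i => q (lift ord0 i))
  (fun i => w0 _) (fun i => Qq _).
rewrite !big_ord_recl /=.
rewrite Er; set W := \sum_(i < m) _.
have W0 : 0 <= W by apply: sumr_ge0 => i _; apply: w0.
have [T0|Tpos] := eqVneq (W + w ord0) 0.
  have /andP[] : (W == 0) && (w ord0 == 0).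
    by rewrite -paddr_eq0 // T0.
  move=> /eqP -> /eqP ->; exists r => //.
  by rewrite !scale0r add0r addr0 scale0r.
have Tgt : 0 < W + w ord0 by rewrite lt_def Tpos addr_ge0.
exists ((W / (W + w ord0)) *: r + (1 - W / (W + w ord0)) *: q ord0).
  apply: Qc => //; first by rewrite divr_ge0 // ltW.
  by rewrite ler_pdivrMr // mul1r lerDl.
rewrite [w ord0 + W]addrC scalerDr !scalerA mulrBr mulr1 [_ * (W / _)]mulrC divfK ?Tpos //.
by rewrite addrAC subrr add0r addrC.
Qed.

Lemma free_size (s : seq 'rV[R]_n) : free s -> (size s <= \dim {: 'rV[R]_n})%N.
Proof.
move=> /eqP <-; exact: dimvS (subvf _).
Qed.

Lemma exists_span : exists s : seq 'rV[R]_n,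
  (forall x, x \in s -> Q x) /\ (forall q, Q q -> q \in (span s)).
Proof.
apply: contrapT => H.
have step : forall k, exists s : seq 'rV[R]_n,
   [/\ (forall x, x \in s -> Q x), free s & size s = k].
  elim=> [|k [s [sQ fs ss]]]; first by exists [::]; split => //; exact: nil_free.
  have : ~ (forall q, Q q -> q \in (span s)) by move=> H2; apply: H; exists s.
  move=> /existsNP [q /not_implyP [Qq qs]].
  exists (q :: s); split.
  - by move=> x; rewrite inE => /orP [/eqP ->|]; [|apply: sQ].
  - by rewrite free_cons fs andbT; apply/negP.
  - by rewrite /= ss.
have [s [_ fs ss]] := step (\dim {: 'rV[R]_n}).+1.
by have := free_size _ fs; rewrite ss ltnn.
Qed.

Lemma K1 (t : R) : 0 < t -> exists2 d : R, 0 < d & forall x, Q x ->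
  (forall j, `|x 0 j| < d) ->
  exists s : R, [/\ 0 <= s, s <= t & exists2 q, Q q & x = s *: q].
Proof.
move=> t0.
have [s [sQ sspan]] := exists_span.
pose T := in_tuple s.
pose C := \sum_(i < size s) \sum_(j < n) `|coord T i (delta_mx 0 j)|.
have C0 : 0 <= C by apply: sumr_ge0 => i _; apply: sumr_ge0 => j _.
exists (t / (C + 1)).
  by rewrite divr_gt0 // ltr_wpDl.
move=> x Qx xs.
have xspan : x \in (span T) by apply: sspan.
have Ex := coord_span xspan.
pose c i := coord T i x.
pose q i := if 0 <= c i then T`_i else - T`_i.
have Qq : forall i : 'I_(size s), Q (q i).
  move=> i; rewrite /q; have Qi : Q T`_i by apply: sQ; apply: mem_nth.
  by case: ifP => _ //; apply: QN.
have [r Qr Er] := @Qsum _ (fun i => `|c i|) q (fun i => normr_ge0 _) Qq.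
exists (\sum_i `|c i|); split.
- by apply: sumr_ge0 => i _.
- have cb : forall i, `|c i| <= t / (C + 1) * \sum_(j < n) `|coord T i (delta_mx 0 j)|.
    move=> i; rewrite /c {1}(row_sum_delta x) linear_sum /=.
    rewrite mulr_sumr; apply: le_trans; first exact: ler_norm_sum.
    apply: ler_sum => j _; rewrite linearZ /= normrM.
    by apply: ler_wpM2r => //; apply: ltW.
  apply: le_trans (ler_sum _ (fun i _ => cb i)) _.
  rewrite -mulr_sumr -/C mulrAC ler_pdivrMr ?ltr_wpDl //.
  by apply: ler_wpM2l; [exact: ltW | rewrite lerDl].
- exists r => //; rewrite -Er {1}Ex; apply: eq_bigr => i _.
  rewrite /q -/(c i); case: ifP => ci.
    by rewrite ger0_norm.
  by rewrite ltr0_norm ?scalerN ?scaleNr ?opprK // ltNge ci.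
Qed.
End K1.

Section Main.
Variables (R : realType) (X Y : normedModType R) (S : {linear X -> Y})
  (HS : continuous S) (F : set X) (Fb : bounded_set F) (Fc : convex F) (n : nat).

Lemma main_step (A : X -> Y) (e eps : R) : det_non_alg n A -> 0 < eps ->
  (forall f, F f -> `|S f - A f| <= e) -> F !=set0 ->
  exists A', [/\ det_non_alg n A', F_measurable F A' &
    forall f, F f -> `|S f - A' f| <= 3 * e + eps].
Proof.
move=> [L [phi [HL HA]]] eps0 He [f0 Ff0].
have HLl : forall i a x y, L i (a *: x + y) = a * L i x + L i y.
  by move=> i; case: (HL i).
have [B B0 HB] : exists2 B, 0 < B & forall x, F x -> `|x| <= B.
  by move: Fb => /pinfty_ex_gt0 [B B0 HB]; exists B.
have : forall i, exists C : R, 0 < C /\ forall x, `|L i x| <= C * `|x|.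
  move=> i; have [C C0 HC] := @lin_bound R X R^o (L i) (L0 (HLl i))
    (fun a x => LZ (HLl i) a x) ((HL i).2 0).
  by exists C.
move=> /choice [Cf HCf].
have [CS CS0 HCS] := @lin_bound R X Y S (linear0 S) (fun a x => ltac:(by rewrite linearZ)) (HS 0).
pose D := CS * (B + B).
have D0 : 0 <= D by rewrite mulr_ge0 // ?addr_ge0 // ltW.
have SD : forall a b, F a -> F b -> `|S a - S b| <= D.
  move=> a b Fa Fb'; rewrite -linearB /=; apply: (le_trans (HCS _)).
  apply: ler_wpM2l; first exact: ltW.
  apply: le_trans; first exact: ler_normB.
  by rewrite lerD ?HB.
pose Nrow (f : X) : 'rV[R]_n := \row_i L i f.
have NrowC : forall (t : R) a b, Nrow (t *: a + (1 - t) *: b) = t *: Nrow a + (1 - t) *: Nrow b.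
  by move=> t a b; apply/rowP => j; rewrite !mxE HLl (LZ (HLl j)).
pose Q := fun x : 'rV[R]_n => exists a b, [/\ F a, F b & x = Nrow a - Nrow b].
have Q0 : Q 0 by exists f0, f0; rewrite subrr.
have QN : forall x, Q x -> Q (- x).
  by move=> x [a [b [Fa Fb' ->]]]; exists b, a; rewrite opprB.
have Qc : forall x y (t : R), Q x -> Q y -> 0 <= t -> t <= 1 -> Q (t *: x + (1 - t) *: y).
  move=> x y t [a [b [Fa Fb' ->]]] [a' [b' [Fa' Fb'' ->]]] t0 t1.
  exists (t *: a + (1 - t) *: a'), (t *: b + (1 - t) *: b'); split.
  - exact: Fc.
  - exact: Fc.
  - rewrite !NrowC !scalerBr opprD !addrA; congr (_ + _).
    by rewrite addrAC.
pose tt := eps / (2 * (D + 1)).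
have tt0 : 0 < tt by rewrite divr_gt0 // mulr_gt0 // ltr_wpDl.
have [d d0 Hd] := @K1 R n Q Q0 QN Qc tt tt0.
pose idx (f : X) : {ffun 'I_n -> int} := [ffun i => Num.floor (L i f / d)].
pose rep (z : {ffun 'I_n -> int}) := xget 0 [set g | F g /\ idx g = z].
pose A' := fun f => A (rep (idx f)).
exists A'; split.
- exists L, (fun y => phi (fun i => L i (rep [ffun i => Num.floor (y i / d)]))).
  by split => // f; rewrite /A' HA.
- move=> Bs _.
  pose cell (z : {ffun 'I_n -> int}) := [set f | F f /\ idx f = z].
  pose G k := match (unpickle k : option {ffun 'I_n -> int}) with
    | Some z => if pselect (Bs (A (rep z))) then cell z else set0
    | None => set0 end.
  have -> : F `&` A' @^-1` Bs = \bigcup_k G k.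
    apply/seteqP; split.
    + move=> f [Ff Bf]; exists (pickle (idx f)) => //.
      rewrite /G pickleK; destruct (pselect (Bs (A (rep (idx f))))) as [HP|H]; first by split.
      by exfalso; apply: H.
    + move=> f [k _]; rewrite /G; case: unpickle => // z.
      destruct (pselect (Bs (A (rep z)))) as [HP|] => // -[Ff Ef]; split => //.
      by rewrite /A' /preimage /= Ef.
  apply: BF_U => k; rewrite /G; case: unpickle => [z|]; last exact: BF_0.
  destruct (pselect (Bs (A (rep z)))); last exact: BF_0.
  pose E k := match (unpickle k : option ('I_n * bool)) with
    | Some (i, true) => [set f | F f /\ L i f / d < (z i)%:~R]
    | Some (i, false) => F `\` [set f | F f /\ L i f / d < (z i + 1)%:~R]
    | None => set0 end.
  have opn : forall i (c : R), BF F [set f | F f /\ L i f / d < c].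
    move=> i c; apply: BF_open.
    apply: (@open_lt R X F (fun f => L i f / d) (Cf i * (B + B) / d)).
      apply: divr_ge0; last exact: ltW.
      by apply: mulr_ge0; [exact: ltW (HCf i).1 | rewrite addr_ge0 // ltW].
    move=> f u t w Ff Fu t0 [a1 Fa1 [b1 Fb1 <-]] ew.
    rewrite -mulrBl -(LB (HLl i)) ew (LZ (HLl i)) -mulrA mulrA.
    rewrite -[t * L i _ / d]mulrA; apply: ler_wpM2l; first exact: ltW.
    apply: ler_wpM2r; first by rewrite invr_ge0 ltW.
    apply: le_trans; first exact: ler_norm.
    apply: le_trans; first exact: (HCf i).2.
    apply: ler_wpM2l; first exact: ltW (HCf i).1.
    apply: le_trans; first exact: ler_normB.
    by rewrite lerD ?HB.
  have -> : cell z = F `\` \bigcup_k E k.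
    apply/seteqP; split.
    + move=> f [Ff Ef]; split => // -[k1 _]; rewrite /E.
      have Efi : forall i, Num.floor (L i f / d) = z i.
        by move=> i; rewrite -Ef /idx ffunE.
      case: unpickle => // -[i []].
      * move=> [_]; rewrite -Efi; apply/negP; rewrite -leNgt; exact: floor_le.
      * move=> [_ H]; apply: H; split => //; rewrite -Efi; exact: floorD1_gt.
    + move=> f [Ff nE]; split => //.
      apply/ffunP => i; rewrite ffunE; apply/eqP; rewrite floor_eq; apply/andP; split.
      * rewrite leNgt; apply/negP => H; apply: nE; exists (pickle (i, true)) => //.
        by rewrite /E pickleK.
      * rewrite ltNge; apply/negP => H; apply: nE; exists (pickle (i, false)) => //.
        rewrite /E pickleK; split => // -[_]; rewrite ltNge H.
        by [].
  apply: BF_D; apply: BF_U => k1; rewrite /E; case: unpickle => [[i []]|].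
  * exact: opn.
  * exact: BF_D (opn _ _).
  * exact: BF_0.
- move=> f Ff; rewrite /A'; set g := rep (idx f).
  have [Fg Eg] : F g /\ idx g = idx f.
    have : [set h | F h /\ idx h = idx f] (rep (idx f)).
      by apply: xgetPex; exists f.
    by [].
  have close : forall j, `|(Nrow g - Nrow f) 0 j| < d.
    move=> j; rewrite !mxE.
    have := congr1 (fun h : {ffun 'I_n -> int} => h j) Eg; rewrite /idx !ffunE => Ej.
    have h1 := floor_le (L j g / d); have h2 := floorD1_gt (L j g / d).
    have h3 := floor_le (L j f / d); have h4 := floorD1_gt (L j f / d).
    rewrite Ej intrD1 in h1 h2.
    rewrite intrD1 in h4.
    have h5 : `|L j g / d - L j f / d| < 1.
      by rewrite ltr_norml; apply/andP; split; lra.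
    have -> : L j g - L j f = d * (L j g / d - L j f / d).
      by field; rewrite gt_eqF.
    by rewrite normrM gtr0_norm // gtr_pMr.
  have Qx : Q (Nrow g - Nrow f) by exists g, f.
  have [s [s0 stt [q [a [b [Fa Fb' ->]]] xe]]] := Hd _ Qx close.
  pose t0 := (1 + s)^-1.
  have s1 : 0 < 1 + s by rewrite ltr_pwDl.
  have t00 : 0 <= t0 by rewrite invr_ge0 ltW.
  have t01 : t0 <= 1 by rewrite invf_le1 // lerDl.
  have e1 : 1 - t0 = t0 * s by rewrite /t0; field; rewrite gt_eqF.
  pose f' := t0 *: f + (1 - t0) *: a.
  pose g' := t0 *: g + (1 - t0) *: b.
  have Ff' : F f' by apply: Fc.
  have Fg' : F g' by apply: Fc.
  have Lgf : forall j, L j g - L j f = s * (L j a - L j b).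
    move=> j; have := congr1 (fun m : 'rV[R]_n => m 0 j) xe; rewrite /= !mxE.
    by [].
  have Lfg : forall j, L j f' = L j g'.
    move=> j; rewrite /f' /g' !HLl !(LZ (HLl j)) e1.
    have := Lgf j; move=> H.
    have -> : L j g = L j f + s * (L j a - L j b) by rewrite -H addrC subrK.
    ring.
  have AA : A f' = A g'.
    by rewrite !HA; congr phi; apply: funext => j; exact: Lfg.
  have Sf : `|S f - S f'| <= s * D.
    have -> : S f - S f' = (1 - t0) *: (S f - S a).
      by rewrite /f' linearD !linearZ /= opprD addrA scalerBr !scalerBl !scale1r.
    rewrite normrZ ger0_norm ?subr_ge0 //; apply: le_trans.
      by apply: ler_wpM2l; [rewrite subr_ge0 | exact: SD].
    by apply: ler_wpM2r => //; rewrite e1 -[leRHS]mul1r; exact: ler_wpM2r.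
  have Sg : `|S g' - S g| <= s * D.
    have -> : S g' - S g = - ((1 - t0) *: (S g - S b)).
      by rewrite /g' linearD !linearZ /= opprB scalerBr (scalerBl 1 t0 (S g)) scale1r opprB addrA [t0 *: S g + _]addrC.
    rewrite normrN normrZ ger0_norm ?subr_ge0 //; apply: le_trans.
      by apply: ler_wpM2l; [rewrite subr_ge0 | exact: SD].
    by apply: ler_wpM2r => //; rewrite e1 -[leRHS]mul1r; exact: ler_wpM2r.
  have sD : s * D <= eps / 2.
    apply: (@le_trans _ _ (tt * (D + 1))).
      by apply: ler_pM => //; rewrite lerDl.
    rewrite /tt; apply: le_trans (_ : eps / 2 <= eps / 2) => //.
    by rewrite le_eqVlt; apply/orP; left; apply/eqP; field; rewrite gt_eqF // ltr_wpDl.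
  have -> : S f - A g = (S f - S f') + (S f' - A f') + (A g' - S g') + (S g' - S g) + (S g - A g).
    by rewrite AA !addrA !subrK.
  have E1 := He _ Ff'; have E2 := He _ Fg'; have E3 := He _ Fg.
  have E2' : `|A g' - S g'| <= e by rewrite -normrN opprB.
  apply: le_trans; first exact: ler_normD.
  apply: le_trans; first by apply: lerD; [exact: ler_normD | exact: E3].
  apply: le_trans; first by apply: lerD; [apply: lerD; [exact: ler_normD|exact: Sg]|exact: le_refl].
  apply: le_trans; first by apply: lerD; [apply: lerD; [apply: lerD; [exact: ler_normD|exact: E2']|exact: le_refl]|exact: le_refl].
  have := lerD (lerD (lerD (lerD Sf E1) E2') Sg) E3.
  lra.
Qed.
End Main.

Theorem lemma6p2 (R : realType) (X Y : completeNormedModType R)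
  (S : {linear X -> Y}) (HS : continuous S)
  (F : set X) (Fb : bounded_set F) (Fc : convex F) (n : nat) :
  (e_det_non_mb n S F <= 8%:E * e_det_non n S F)%E.
Proof.
have [Fne|F0] := pselect (F !=set0); last first.
  have A0 : det_non_alg n (fun _ : X => (0%R : Y)).
    exists (fun _ _ => 0), (fun _ => 0); split => // i; split.
    - by move=> a x y; rewrite mulr0 addr0.
    - by move=> x; apply: cst_continuous.
  have Fe : F = set0 by apply/seteqP; split => // x Fx; apply: F0; exists x.
  suff -> : e_det_non_mb n S F = -oo%E by rewrite leNye.
  apply/eqP; rewrite eq_le leNye andbT.
  have h : (e_det_non_mb n S F <= err S F (fun _ : X => (0%R : Y)))%E.
    apply: ereal_inf_lbound; exists (fun _ : X => (0%R : Y)) => //; split => //.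
    by move=> B _; rewrite Fe set0I; apply: (@BF_0 R X set0).
  by move: h; rewrite /err Fe image_set0 ereal_sup0.
have [f0 Ff0] := Fne.
have E0 : (0 <= e_det_non n S F)%E.
  apply: le_ereal_inf_tmp => _ [A _ <-].
  apply: le_ereal_sup_tmp; exists (`|S f0 - A f0|%:E)%E; first by exists f0.
  by rewrite lee_fin.
have H3 : forall r : R, e_det_non n S F = r%:E -> (e_det_non_mb n S F <= (3 * r)%:E)%E.
  move=> r Er; apply/lee_addgt0Pr => eps eps0.
  have : (e_det_non n S F < (r + eps / 4)%:E)%E.
    by rewrite Er lte_fin ltrDl divr_gt0.
  move=> /ereal_inf_lt [_ [A HA <-]] errA.
  have He : forall f, F f -> `|S f - A f| <= r + eps / 4.
    move=> f Ff; rewrite -lee_fin; apply: ltW; apply: le_lt_trans errA.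
    by apply: ereal_sup_ubound; exists f.
  have [A' [HA' MA' BA']] := @main_step R X Y S HS F Fb Fc n A (r + eps / 4) (eps / 4)
    HA ltac:(by rewrite divr_gt0) He Fne.
  have h : (e_det_non_mb n S F <= err S F A')%E.
    by apply: ereal_inf_lbound; exists A'.
  apply: le_trans h _.
  apply: ge_ereal_sup => _ [f Ff <-]; rewrite -EFinD lee_fin.
  apply: le_trans (BA' f Ff) _; lra.
move: E0; case E : (e_det_non n S F) => [r| |] // r0.
- apply: le_trans (H3 r E) _; rewrite -EFinM lee_fin.
  by apply: ler_wpM2r; [rewrite -lee_fin | lra].
- by rewrite mulry gtr0_sg // mul1e leey.
Qed.
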